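(* Let $(T,f,(\le_h))$ and $(T',f',(\le'_h))$ be ordered merge trees and $\delta\ge0$. If there exists a monotone $\delta$-interleaving between them, then there exists a monotone $\delta$-good map $T\to T'$.
   Context: A merge tree $(T,f)$: a finite rooted tree $T$ identified with its topological realisation, with a continuous $f\colon T\to\mathbb{R}\cup\{\infty\}$ strictly increasing towards the root, $f(v)=\infty$ iff $v$ is the root; lowest leaf at height $0$. $x_1\preceq x_2$ ($x_2$ ancestor of $x_1$) iff there is an $f$-increasing path from $x_1$ to $x_2$; $\mathrm{anc}_h(x)$ is the unique ancestor of $x$ at height $h\ge f(x)$; $x^\delta:=\mathrm{anc}_{f(x)+\delta}(x)$; $\mathbb{L}_h=\{x:f(x)=h\}$. A layer-order is a family $(\le_h)_{h\ge0}$ of total orders on the $\mathbb{L}_h$ that is consistent ($h_1\le h_2$, $x_1\le_{h_1}x_2$ imply $\mathrm{anc}_{h_2}(x_1)\le_{h_2}\mathrm{anc}_{h_2}(x_2)$); $(T,f,(\le_h))$ is an ordered merge tree. A map $\alpha\colon T\to T'$ with $f'(\alpha(x))=f(x)+\delta$ for all $x$ is monotone if for all $h$ and $x_1,x_2\in\mathbb{L}_h$, $x_1\le_h x_2$ implies $\alpha(x_1)\le'_{h+\delta}\alpha(x_2)$. A $\delta$-interleaving is a pair of continuous maps $\alpha\colon T\to T'$, $\beta\colon T'\to T$ with $f'(\alpha(x))=f(x)+\delta$, $\beta(\alpha(x))=x^{2\delta}$, $f(\beta(y))=f'(y)+\delta$, $\alpha(\beta(y))=y^{2\delta}$ for all $x\in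 T,y\in T'$; it is monotone if $\alpha$ and $\beta$ are. A $\delta$-good map is a continuous map $\alpha\colon T\to T'$ with (G1) $f'(\alpha(x))=f(x)+\delta$ for all $x$; (G2) if $\alpha(x_1)\succeq\alpha(x_2)$ then $x_1^{2\delta}\succeq x_2^{2\delta}$; (G3) $|f'(y^F)-f'(y)|\le2\delta$ for all $y\in T'\setminus\mathrm{Im}(\alpha)$, where $y^F$ is the lowest ancestor of $y$ in $\mathrm{Im}(\alpha)$. A monotone $\delta$-good map is a $\delta$-good map that is monotone. *)

(* Defs.v *)
From HB Require Import structures.
From mathcomp Require Import all_boot all_order all_algebra.
From mathcomp Require Import boolp reals constructive_ereal.
Set Implicit Arguments. Unset Strict Implicit. Unset Printing Implicit Defensive.
Import Order.TTheory GRing.Theory Num.Theory.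
Local Open Scope ring_scope.
Local Open Scope ereal_scope.

(* A finite rooted tree on the vertex type mV, root mroot, parent map mpar
   (mpar root = root, every vertex reaches the root), heights mhv of the
   non-root vertices, strictly increasing towards the root; the root has
   height +oo. *)
Record mtree (R : realType) := MTree {
  mV : finType;
  mroot : mV;
  mpar : mV -> mV;
  mhv : mV -> R;
  mpar_root : mpar mroot = mroot;
  mreach : forall v, exists n, iter n mpar v = mroot;
  mhv_incr : forall v, v != mroot -> mpar v != mroot -> (mhv v < mhv (mpar v))%R;
  mhv_ge0 : forall v, v != mroot -> (0 <= mhv v)%R;
  mlowest : exists v, v != mroot /\ mhv v = 0%R
}.

Arguments mroot {R} m.
Arguments mpar {R} m.
Arguments mhv {R} m.

Section Realisation.
Context {R : realType} (T : mtree R).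

(* Points of the topological realisation: the root (None), or a point
   (v, t) on the half-open edge from v (included) up to its parent
   (excluded); edges into the root are rays [mhv v, +oo). *)
Definition validp (p : option (mV T * R)) : Prop :=
  match p with
  | None => True
  | Some (v, t) => v != mroot T /\ (mhv T v <= t)%R /\
                   (mpar T v = mroot T \/ (t < mhv T (mpar T v))%R)
  end.

Definition pt := {p : option (mV T * R) | validp p}.

Definition ht (x : pt) : \bar R :=
  match proj1_sig x with None => +oo | Some (_, t) => t%:E end.

Definition is_anc (x y : pt) : Prop :=
  match proj1_sig x, proj1_sig y with
  | _, None => True
  | None, Some _ => False
  | Some (v, t), Some (w, s) => (exists n, iter n (mpar T) v = w) /\ (t <= s)%R
  end.

Definition anch (h : \bar R) (x : pt) : pt :=
  match pselect (exists y, is_anc x y /\ ht y = h) with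
  | left H => proj1_sig (cid H)
  | right _ => x
  end.

Definition shift (x : pt) (d : R) : pt := anch (ht x + d%:E) x.

(* Topology of the realisation: path metric on finite points
   (d(x,y) = f(z)-f(x) + f(z)-f(y) for z the lowest common ancestor),
   and neighbourhoods {f > N} of the root. [close x y e] means d(x,y) < e. *)
Definition close (x y : pt) (e : R) : Prop :=
  exists z, is_anc x z /\ is_anc y z /\ ht z != +oo /\
    (fine (ht z) - fine (ht x) + (fine (ht z) - fine (ht y)) < e)%R.

Definition in_nbhs (x : pt) (P : pt -> Prop) : Prop :=
  match proj1_sig x with
  | None => exists N : R, forall y, N%:E < ht y -> P y
  | Some _ => exists2 eta : R, (0 < eta)%R & forall y, close x y eta -> P y
  end.

End Realisation.

Definition continuous_mt {R : realType} (T T' : mtree R) (a : pt T -> pt T') :=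
  forall x (P : pt T' -> Prop), in_nbhs (a x) P -> in_nbhs x (fun y => P (a y)).

Record omtree (R : realType) := OMTree {
  omt :> mtree R;
  ole : R -> pt omt -> pt omt -> Prop;
  ole_refl : forall h x, (0 <= h)%R -> ht x = h%:E -> ole h x x;
  ole_anti : forall h x y, (0 <= h)%R -> ht x = h%:E -> ht y = h%:E ->
               ole h x y -> ole h y x -> x = y;
  ole_trans : forall h x y z, (0 <= h)%R -> ht x = h%:E -> ht y = h%:E ->
               ht z = h%:E -> ole h x y -> ole h y z -> ole h x z;
  ole_total : forall h x y, (0 <= h)%R -> ht x = h%:E -> ht y = h%:E ->
               ole h x y \/ ole h y x;
  ole_consistent : forall h1 h2 x1 x2, (0 <= h1)%R -> (h1 <= h2)%R ->
               ht x1 = h1%:E -> ht x2 = h1%:E -> ole h1 x1 x2 ->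
               ole h2 (anch h2%:E x1) (anch h2%:E x2)
}.

Section Maps.
Context {R : realType} (T T' : omtree R).

Definition shifts_by (d : R) (a : pt T -> pt T') : Prop :=
  forall x, ht (a x) = ht x + d%:E.

Definition monotone_mt (d : R) (a : pt T -> pt T') : Prop :=
  forall h x1 x2, (0 <= h)%R -> ht x1 = h%:E -> ht x2 = h%:E ->
    ole h x1 x2 -> ole (h + d)%R (a x1) (a x2).

Definition good_map (d : R) (a : pt T -> pt T') : Prop :=
  continuous_mt a /\
  shifts_by d a /\
  (forall x1 x2, is_anc (a x2) (a x1) ->
      is_anc (shift x2 (2 * d)) (shift x1 (2 * d))) /\
  (forall y, ~ (exists x, a x = y) ->
      exists yF, [/\ is_anc y yF, (exists x, a x = yF),
                     (forall w, is_anc y w -> (exists x, a x = w) -> is_anc yF w)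
                   & `|ht yF - ht y| <= (2 * d)%:E]).

Definition monotone_good_map (d : R) (a : pt T -> pt T') : Prop :=
  good_map d a /\ monotone_mt d a.

End Maps.

Definition interleaving {R : realType} (T T' : omtree R) (d : R)
    (a : pt T -> pt T') (b : pt T' -> pt T) : Prop :=
  [/\ continuous_mt a, continuous_mt b,
      shifts_by d a /\ shifts_by d b,
      forall x, b (a x) = shift x (2 * d)
    & forall y, a (b y) = shift y (2 * d)].

Definition monotone_interleaving {R : realType} (T T' : omtree R) (d : R)
    (a : pt T -> pt T') (b : pt T' -> pt T) : Prop :=
  interleaving d a b /\ monotone_mt d a /\ monotone_mt d b.

(* Main.v *)
Require Import Defs.
From mathcomp Require Import all_boot all_order all_algebra.
From mathcomp Require Import boolp classical_sets reals constructive_ereal.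
From mathcomp Require Import lra.
Set Implicit Arguments. Unset Strict Implicit. Unset Printing Implicit Defensive.
Import Order.TTheory GRing.Theory Num.Theory.
Local Open Scope ring_scope.

Section Basic.
Context {R : realType} (T : mtree R).

Lemma pt_eq (x y : pt T) : proj1_sig x = proj1_sig y -> x = y.
Proof.
case: x => p hp; case: y => q hq /= E; subst q.
by rewrite (Prop_irrelevance hp hq).
Qed.

Lemma iter_root n : iter n (mpar T) (mroot T) = mroot T.
Proof. by elim: n => //= n ->; rewrite mpar_root. Qed.

Lemma iter_hv n (x z : mV T) : iter n (mpar T) x = z -> z != mroot T -> x != z ->
  mpar T x != mroot T /\ (mhv T (mpar T x) <= mhv T z)%R.
Proof.
elim: n x => [|n IH] x; first by move=> /= -> _; rewrite eqxx.
rewrite iterSr => Hi zr xz.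
have pr : mpar T x != mroot T.
  apply/negP => /eqP E; move: Hi; rewrite E iter_root => E2; by rewrite -E2 eqxx in zr.
split => //.
have [E|NE] := eqVneq (mpar T x) z; first by rewrite E.
have [ppr le] := IH _ Hi zr NE.
apply: le_trans le; apply: ltW; apply: mhv_incr => //.
Qed.

Lemma ht_none (x : pt T) : ht x = (+oo)%E -> proj1_sig x = None.
Proof. by case: x => [[[v t]|] H] //=. Qed.

Lemma is_anc_refl (x : pt T) : is_anc x x.
Proof. case: x => [[[v t]|] H] //=; rewrite /is_anc /=; split => //; by exists 0%N. Qed.

Lemma is_anc_trans (x y z : pt T) : is_anc x y -> is_anc y z -> is_anc x z.
Proof.
case: x => [[[v t]|] Hx]; case: y => [[[w s]|] Hy]; case: z => [[[u r]|] Hz];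
  rewrite /is_anc //=.
move=> [[n Hn] l1] [[m Hm] l2]; split; last exact: le_trans l2.
by exists (m + n)%N; rewrite iterD Hn.
Qed.

Lemma is_anc_ht (x y : pt T) : is_anc x y -> (ht x <= ht y)%E.
Proof.
case: x => [[[v t]|] Hx]; case: y => [[[w s]|] Hy]; rewrite /is_anc /ht //=.
by move=> [_ l]; rewrite lee_fin.
all: by rewrite ?leey.
Qed.


Lemma anc_vert n : forall v, iter n (mpar T) v = mroot T -> v != mroot T ->
  forall t, (mhv T v <= t)%R ->
  exists u, (exists k, iter k (mpar T) v = u) /\ validp (Some (u, t)).
Proof.
elim: n => [|n IH] v; first by move=> /= ->; rewrite eqxx.
rewrite iterSr => Hi vr t ht.
have [pr|pr] := eqVneq (mpar T v) (mroot T).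
  by exists v; split; [exists 0%N | split => //; split => //; left].
have [lt|ge] := ltP t (mhv T (mpar T v)).
  by exists v; split; [exists 0%N | split => //; split => //; right].
have [u [[k Hk] V]] := IH _ Hi pr t ge.
by exists u; split => //; exists k.+1; rewrite iterSr.
Qed.

Lemma exists_anc_at (x : pt T) v h : proj1_sig x = Some (v, h) ->
  forall t, (h <= t)%R -> exists p : pt T, is_anc x p /\ ht p = t%:E.
Proof.
case: x => [p Hp] /= E; subst p => t le.
have [vr [hv _]] := Hp.
have [n Hn] := @mreach _ T v.
have [u [[k Hk] V]] := anc_vert Hn vr (le_trans hv le).
exists (exist _ (Some (u, t)) V); rewrite /is_anc /ht /=; split => //.
by split => //; exists k.
Qed.

Lemma chain (y p w : pt T) : is_anc y p -> is_anc y w -> (ht p <= ht w)%E ->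
  is_anc p w.
Proof.
case: w => [[[u' s]|] Hw]; last by case: p => [[[? ?]|] ?].
case: p => [[[u t]|] Hp]; last by rewrite /ht /= leye_eq.
case: y => [[[v h]|] Hy]; rewrite /is_anc /ht //=.
move=> [[m Hm] _] [[n Hn] _]; rewrite lee_fin => ts; split => //.
have [mn|nm] := leqP m n.
  by exists (n - m)%N; rewrite -Hm -iterD subnK.
have E : iter (m - n) (mpar T) u' = u by rewrite -Hn -iterD subnK // ltnW.
have [eq|ne] := eqVneq u' u; first by exists 0%N.
case: Hp => [ur [hu _]]; case: Hw => [u'r [_ Hs]].
have [pr le] := iter_hv E ur ne.
case: Hs => [Hs|Hs]; first by rewrite Hs eqxx in pr.
have : (mhv T (mpar T u') <= s)%R.
  by apply: le_trans le _; apply: le_trans hu ts.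
by rewrite leNgt Hs.
Qed.

Lemma anc_same_ht (p w : pt T) : is_anc p w -> ht p = ht w -> p = w.
Proof.
case: p => [[[u t]|] Hp]; case: w => [[[u' s]|] Hw]; rewrite /is_anc /ht //=;
  last by move=> _ _; apply: pt_eq.
move=> [[k Hk] _] [E]; subst s; apply: pt_eq => /=.
have [eq|ne] := eqVneq u u'; first by rewrite eq.
case: Hp => [ur [hu Hs]]; case: Hw => [u'r [hu' _]].
have [pr le] := iter_hv Hk u'r ne.
case: Hs => [Hs|Hs]; first by rewrite Hs eqxx in pr.
have : (mhv T (mpar T u) <= t)%R by apply: le_trans le hu'.
by rewrite leNgt Hs.
Qed.

Lemma anch_spec (x : pt T) h : (exists y, is_anc x y /\ ht y = h) ->
  is_anc x (anch h x) /\ ht (anch h x) = h.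
Proof.
move=> ex; rewrite /anch; case: pselect => [H|//].
by case: (cid H).
Qed.

Lemma shift_fin (x : pt T) v h e : proj1_sig x = Some (v, h) -> (0 <= e)%R ->
  is_anc x (shift x e) /\ ht (shift x e) = (h + e)%:E.
Proof.
move=> E e0.
have hx : ht x = h%:E by rewrite /ht E.
rewrite /shift hx /=; apply: anch_spec.
by apply: (exists_anc_at E); rewrite lerDl.
Qed.

Lemma shift_root (x : pt T) e : proj1_sig x = None -> shift x e = x.
Proof.
move=> E.
have hx : ht x = (+oo)%E by rewrite /ht E.
have [_ H2] : is_anc x (shift x e) /\ ht (shift x e) = (+oo)%E.
  rewrite /shift hx /=; apply: anch_spec; exists x; split => //.
  exact: is_anc_refl.
by apply: pt_eq; rewrite E; apply: ht_none.
Qed.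

End Basic.

Lemma ht_fin {R : realType} (T : mtree R) (x : pt T) t : ht x = t%:E ->
  exists v, proj1_sig x = Some (v, t).
Proof. by case: x => [[[v s]|] H] //= [->]; exists v. Qed.

Lemma is_anc_root {R : realType} (T : mtree R) (x y : pt T) :
  proj1_sig y = None -> is_anc x y.
Proof. by move=> E; rewrite /is_anc E; case: (proj1_sig x) => [[]|]. Qed.

Section Maps.
Context {R : realType} (T T' : mtree R) (d : R) (b : pt T -> pt T')
  (cb : continuous_mt b) (sb : forall x, ht (b x) = (ht x + d%:E)%E).

Lemma b_root x : proj1_sig x = None -> proj1_sig (b x) = None.
Proof. by move=> E; apply: ht_none; rewrite sb /ht E. Qed.

Lemma local_anc (p : pt T) v h : proj1_sig p = Some (v, h) ->
  exists2 eta, 0 < eta &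
   (forall p' s, is_anc p p' -> ht p' = s%:E -> s < h + eta -> is_anc (b p) (b p')) /\
   (forall p' s, is_anc p' p -> ht p' = s%:E -> h - eta < s -> is_anc (b p') (b p)).
Proof.
move=> Ep.
have hp : ht p = h%:E by rewrite /ht Ep.
have [w Ew] : exists w, proj1_sig (b p) = Some (w, h + d).
  by apply: ht_fin; rewrite sb hp.
pose Q z := (((h + d)%:E <= ht z)%E -> is_anc (b p) z) /\
            ((ht z <= (h + d)%:E)%E -> is_anc z (b p)).
have nQ : in_nbhs (b p) Q.
  rewrite /in_nbhs Ew.
  have Vw := proj2_sig (b p); rewrite Ew in Vw; case: Vw => [wr [hw Hs]].
  pose g := if mpar T' w == mroot T' then 1 else mhv T' (mpar T' w) - (h + d).
  have g0 : 0 < g.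
    rewrite /g; case: eqP => [//|/eqP ne]; rewrite subr_gt0.
    by case: Hs => [E|//]; rewrite E eqxx in ne.
  exists g => // z [c [Hc1 [Hc2 [Hc3 Hc4]]]].
  move: Hc1 Hc2 Hc3 Hc4; rewrite /is_anc /ht Ew.
  case: c => [[[cw hc]|] Vc] //=; case: z => [[[zw hz]|] Vz] //= [[m Hm] l1] [[n Hn] l2] _ hlt.
  have hcg : hc < h + d + g by lra.
  have cwE : cw = w.
    have [//|ne] := eqVneq cw w; rewrite eq_sym in ne; exfalso.
    case: Vc => [cr [hcv _]].
    have [pr hle] := iter_hv Hm cr ne.
    move: hcg; rewrite /g (negbTE pr) => hcg.
    have := le_trans hle hcv; lra.
  rewrite cwE in Hn; split; rewrite /ht /is_anc Ew /= lee_fin => hle2; split => //; last first.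
    by exists n.
  have [eq|ne] := eqVneq zw w; first by exists 0%N.
  case: Vz => [zr [_ Hz]].
  have [pr hle'] := iter_hv Hn wr ne.
  case: Hz => [E|Hz]; first by rewrite E eqxx in pr.
  have : mhv T' (mpar T' zw) <= hz by apply: le_trans hle' (le_trans hw hle2).
  by rewrite leNgt Hz.
have := cb nQ; rewrite /in_nbhs Ep => -[eta eta0 Heta].
exists eta => //; split.
- move=> p' s Ha Hs lts.
  have [Q1 _] : Q (b p').
    apply: Heta; exists p'; split => //; split; first exact: is_anc_refl.
    by rewrite Hs hp /=; split => //; lra.
  apply: Q1; rewrite sb Hs lee_fin lerD2r -lee_fin -Hs -hp.
  exact: is_anc_ht.
- move=> p' s Ha Hs lts.
  have [_ Q2] : Q (b p').
    apply: Heta; exists p; split; first exact: is_anc_refl.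
    by rewrite Hs hp /=; split => //; split => //; lra.
  apply: Q2; rewrite sb Hs lee_fin lerD2r -lee_fin -Hs -hp.
  exact: is_anc_ht.
Qed.


Lemma anc_pres (y1 y2 : pt T) : is_anc y1 y2 -> is_anc (b y1) (b y2).
Proof.
case E2: (proj1_sig y2) => [[v2 h2]|]; last first.
  by move=> _; apply: is_anc_root; apply: b_root.
case E1: (proj1_sig y1) => [[v1 h1]|]; last by rewrite /is_anc E1 E2.
move=> H12.
have h12 : h1 <= h2.
  by have := is_anc_ht H12; rewrite /ht E1 E2 lee_fin.
pose P s := forall p, is_anc y1 p -> ht p = s%:E -> is_anc (b y1) (b p).
pose G := fun t => h1 <= t <= h2 /\ forall s, h1 <= s <= t -> P s.
have P1 : P h1.
  move=> p Hp Hh; have -> : p = y1; last exact: is_anc_refl.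
  apply/esym/anc_same_ht => //; by rewrite Hh /ht E1.
have G1 : G h1.
  split; first by rewrite lexx h12.
  move=> s /andP[a1 a2]; have -> // : s = h1 by apply: le_anti; rewrite a1 a2.
have hs : has_sup G.
  split; first by exists h1.
  by exists h2 => t [/andP[_ ->]].
set ts := sup G.
have ub := sup_upper_bound hs.
have h1ts : h1 <= ts by apply: ub.
have tsh2 : ts <= h2 by apply: ge_sup; [exists h1 | move=> t [/andP[_ ->]]].
have Pts : P ts.
  move=> p Hp Hh.
  have [vp Ep] := ht_fin Hh.
  have [eta eta0 [_ Hd]] := local_anc Ep.
  have [t Gt tlt] := sup_adherent eta0 hs.
  have tts : t <= ts by apply: ub.
  have [h1t _] := Gt; move/andP: h1t => [h1t _].
  have [q0 [Hpt Hht]] := exists_anc_at E1 h1t.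
  have Pt : is_anc (b y1) (b q0).
    by case: Gt => _ Gt; apply: (Gt t _ q0 Hpt Hht); rewrite h1t lexx.
  apply: is_anc_trans Pt _.
  apply: (Hd _ t); [|exact: Hht|exact: tlt].
  by apply: chain Hpt Hp _; rewrite Hht Hh lee_fin.
have Gts : G ts.
  split; first by rewrite h1ts tsh2.
  move=> s /andP[s1 s2].
  have [slt|] := ltP s ts; last by move=> s3; have -> // : s = ts; apply: le_anti; rewrite s2 s3.
  have e0 : 0 < ts - s by rewrite subr_gt0.
  have [t [_ Gt] tlt] := sup_adherent e0 hs.
  apply: Gt; rewrite s1 /=; rewrite -/ts in tlt; lra.
have tsE : ts = h2.
  apply/le_anti; rewrite tsh2 /=; rewrite leNgt; apply/negP => tslt.
  have [ps [Hps Hpsh]] := exists_anc_at E1 h1ts.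
  have [vp Ep] := ht_fin Hpsh.
  have [eta eta0 [Hu _]] := local_anc Ep.
  pose t' := Order.min (ts + eta / 2) h2.
  have t'1 : ts < t'.
    by rewrite /t' lt_min tslt andbT ltrDl divr_gt0.
  have t'2 : t' <= h2 by rewrite /t' ge_min lexx orbT.
  have t'3 : t' <= ts + eta / 2 by rewrite /t' ge_min lexx.
  have : G t'.
    split; first by rewrite t'2 andbT; apply: le_trans h1ts (ltW t'1).
    move=> s /andP[s1 s2].
    have [sle|slt] := leP s ts; first by case: Gts => _ Gts; apply: (Gts s); rewrite s1.
    move=> p Hp Hh.
    apply: is_anc_trans (Pts _ Hps Hpsh) _.
    apply: (Hu _ s) => //; last by lra.
    by apply: chain Hps Hp _; rewrite Hh Hpsh lee_fin ltW.
  move/ub; rewrite -/ts => t'le.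
  by move: t'1; rewrite ltNge t'le.
case: Gts => _ Gts.
apply: (Gts h2); first by rewrite -tsE h1ts lexx.
- exact: H12.
- by rewrite /ht E2.
Qed.

End Maps.

Lemma fin_uniform {R : realType} (V : finType) (Q : V -> R -> Prop) :
  (forall v e e', 0 < e' -> e' <= e -> Q v e -> Q v e') ->
  (forall v, exists2 e, 0 < e & Q v e) -> exists2 e, 0 < e & forall v, Q v e.
Proof.
move=> mono ex.
suff [e e0 He] : exists2 e, 0 < e & forall v, v \in enum V -> Q v e.
  by exists e => // v; apply: He; rewrite mem_enum.
elim: (enum V) => [|v s [e1 e10 IH]]; first by exists 1.
have [e2 e20 H2] := ex v.
have m0 : 0 < Order.min e1 e2 by rewrite lt_min e10 e20.
exists (Order.min e1 e2) => // u; rewrite in_cons => /orP[/eqP ->|us].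
  by apply: mono H2 => //; rewrite ge_min lexx orbT.
by apply: mono (IH _ us) => //; rewrite ge_min lexx.
Qed.

Lemma close_mono {R : realType} (T : mtree R) (x y : pt T) e e' :
  close x y e -> e <= e' -> close x y e'.
Proof.
move=> [z [h1 [h2 [h3 h4]]]] le; exists z; do 3!split => //.
exact: lt_le_trans le.
Qed.

Lemma sep_nbhs {R : realType} (T : mtree R) (r p : pt T) rw pw t0 :
  proj1_sig r = Some (rw, t0) -> proj1_sig p = Some (pw, t0) -> r <> p ->
  in_nbhs r (fun z => ~ is_anc p z).
Proof.
move=> Er Ep ne; rewrite /in_nbhs Er.
have Vr := proj2_sig r; rewrite Er in Vr; case: Vr => [rr [hr Hr]].
have Vp := proj2_sig p; rewrite Ep in Vp; case: Vp => [pr [hp Hp]].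
pose g := if mpar T rw == mroot T then 1 else mhv T (mpar T rw) - t0.
have g0 : 0 < g.
  rewrite /g; case: eqP => [//|/eqP nr]; rewrite subr_gt0.
  by case: Hr => [E|//]; rewrite E eqxx in nr.
exists g => // z [c [Hc1 [Hc2 [Hc3 Hc4]]]] Hpz.
have Hpc := is_anc_trans Hpz Hc2.
move: Hc1 Hc2 Hc3 Hc4 Hpc; clear Hpz; rewrite /is_anc /ht Er Ep.
case: c => [[[cw hc]|] Vc] //=; case: z => [[[zw hz]|] Vz] //= [[m Hm] l1] [[n Hn] l2] _ hlt [[k Hk] _].
have [E|nrc] := eqVneq rw cw.
  rewrite -E in Hk.
  have [E2|npr] := eqVneq pw rw.
    by apply: ne; apply: pt_eq; rewrite Er Ep E2.
  have [ppr hle] := iter_hv Hk rr npr.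
  case: Hp => [E3|Hp]; first by rewrite E3 eqxx in ppr.
  have := le_trans hle hr; lra.
case: Vc => [cr [hcv _]].
have [prr hle] := iter_hv Hm cr nrc.
move: hlt; rewrite /g (negbTE prr) => hlt.
have := le_trans hle hcv; lra.
Qed.

Lemma lowest {R : realType} (T T' : mtree R) (d : R) (a : pt T -> pt T')
  (ca : continuous_mt a) (sa : forall x, ht (a x) = (ht x + d%:E)%E)
  (y : pt T') vy hy t1 :
  proj1_sig y = Some (vy, hy) ->
  (exists w x, is_anc y w /\ ht w = t1%:E /\ a x = w) ->
  exists yF t0, [/\ is_anc y yF, (exists x, a x = yF),
     (forall w, is_anc y w -> (exists x, a x = w) -> is_anc yF w),
     ht yF = t0%:E & hy <= t0 <= t1].
Proof.
move=> Ey ex1.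
pose S := fun t => exists w x, is_anc y w /\ ht w = t%:E /\ a x = w.
have lbS : lbound S hy.
  move=> t [w [x [Hw [Hh _]]]].
  by have := is_anc_ht Hw; rewrite Hh /ht Ey lee_fin.
have hiS : has_inf S by split; [exists t1 | exists hy].
set t0 := inf S.
have hyt0 : hy <= t0 by apply: lb_le_inf => //; exists t1.
have t0t1 : t0 <= t1 by apply: ge_inf => //; exists hy.
have [p [Hp Hph]] := exists_anc_at Ey hyt0.
have [pw Ep] := ht_fin Hph.
have [x0 Hx0] : exists x, a x = p.
  apply: contrapT => nex.
  have nex' : forall x, a x <> p by move=> x Hx; apply: nex; exists x.
  pose Q v e := ((v != mroot T) -> t0 - d < mhv T v -> e <= mhv T v - (t0 - d)) /\
     (forall xv : pt T, proj1_sig xv = Some (v, t0 - d) ->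
        forall x, close xv x e -> ~ is_anc p (a x)).
  have [eps eps0 Heps] : exists2 e, 0 < e & forall v, Q v e.
    apply: fin_uniform.
      move=> v e e' e'0 le [Q1 Q2]; split.
        by move=> vr lt; apply: le_trans le (Q1 vr lt).
      by move=> xv Exv x Hc; apply: (Q2 xv Exv); apply: close_mono Hc le.
    move=> v.
    have [e1 e10 H1] : exists2 e1, 0 < e1 &
        ((v != mroot T) -> t0 - d < mhv T v -> e1 <= mhv T v - (t0 - d)).
      case: (pselect ((v != mroot T) /\ t0 - d < mhv T v)) => [[vr lt]|nc].
        by exists (mhv T v - (t0 - d)); rewrite ?subr_gt0.
      by exists 1 => // vr lt; exfalso; apply: nc.
    have [e2 e20 H2] : exists2 e2, 0 < e2 &
        (forall xv : pt T, proj1_sig xv = Some (v, t0 - d) ->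
          forall x, close xv x e2 -> ~ is_anc p (a x)).
      case: (pselect (exists xv : pt T, proj1_sig xv = Some (v, t0 - d))) =>
        [[xv Exv]|nc]; last first.
        by exists 1 => // xv Exv; exfalso; apply: nc; exists xv.
      have hr : ht (a xv) = t0%:E by rewrite sa /ht Exv /= -EFinD subrK.
      have [rw Er] := ht_fin hr.
      have := ca xv _ (sep_nbhs Er Ep (nex' xv)).
      rewrite /in_nbhs Exv => -[e2 e20 He2].
      exists e2 => // xv' Exv' x Hc.
      have E' : xv' = xv by apply: pt_eq; rewrite Exv Exv'.
      rewrite E' in Hc.
      exact: He2.
    exists (Order.min e1 e2); first by rewrite lt_min e10 e20.
    split.
      by move=> vr lt; apply: le_trans (H1 vr lt); rewrite ge_min lexx.
    move=> xv Exv x Hc; apply: (H2 xv Exv); apply: close_mono Hc _.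
    by rewrite ge_min lexx orbT.
  have [t [w [x [Hw [Hwh Hax]]]] tlt] := inf_adherent eps0 hiS.
  have t0t : t0 <= t by apply: ge_inf => //; [exists hy | exists w, x].
  have Hpw : is_anc p w by apply: chain Hp Hw _; rewrite Hph Hwh lee_fin.
  have hx : ht x = (t - d)%:E.
    move: (sa x); rewrite Hax Hwh.
    case: x Hax => [[[v s]|] Vx] //= _ [->]; by rewrite addrK.
  have [v Ex] := ht_fin hx.
  have Vx := proj2_sig x; rewrite Ex in Vx; case: Vx => [vr [hv Hs]].
  have [Q1 Q2] := Heps v.
  have hvt : mhv T v <= t0 - d.
    rewrite leNgt; apply/negP => lt.
    have := Q1 vr lt; lra.
  have Vxv : validp (Some (v, t0 - d)).
    split => //; split => //.
    by case: Hs => [->|Hs]; [left | right; lra].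
  apply: (Q2 (exist _ _ Vxv) erefl x); last by rewrite Hax.
  exists x; split; first by rewrite /is_anc Ex /=; split; [exists 0%N | lra].
  split; first exact: is_anc_refl.
  by rewrite /ht Ex /=; split => //; lra.
exists p, t0; split => //; first by exists x0.
  move=> w Hw [x Hx].
  case Ew: (proj1_sig w) => [[ww s]|]; last exact: is_anc_root.
  have Hs : ht w = s%:E by rewrite /ht Ew.
  have t0s : t0 <= s by apply: ge_inf => //; [exists hy | exists w, x].
  by apply: chain Hp Hw _; rewrite Hph Hs lee_fin.
by rewrite hyt0 t0t1.
Qed.
Unset Implicit Arguments.

Theorem lemma39 (R : realType) (T T' : omtree R) (delta : R) :
  0 <= delta ->
  (exists (a : pt T -> pt T') (b : pt T' -> pt T),
      monotone_interleaving delta a b) ->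
  exists a : pt T -> pt T', monotone_good_map delta a.
Proof.
move=> d0 [a [b [[ca cb [sa sb] ba ab] [ma mb]]]].
exists a; split => //; split => //; split => //; split.
  move=> x1 x2 H.
  rewrite -!ba; exact: (anc_pres cb sb H).
move=> y ny.
case Ey: (proj1_sig y) => [[vy hy]|]; last first.
  by exfalso; apply: ny; exists (b y); rewrite ab shift_root.
have d20 : 0 <= 2 * delta by rewrite mulr_ge0.
have [Hs Hsh] := shift_fin Ey d20.
have [yF [t0 [H1 H2 H3 H4 /andP[H5 H6]]]] :=
  lowest ca sa Ey (ex_intro _ _ (ex_intro _ (b y) (conj Hs (conj Hsh (ab y))))).
exists yF; split => //.
rewrite H4 /ht Ey /= lee_fin ger0_norm; first lra.
by rewrite subr_ge0.
Qed.
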